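(* Let $s\ge2$, $\eta>0$ and $z\in\mathbb{R}_{\ge0}^s$ with $\sum_j z_j>0$ not a constant vector. Let $\tilde z_k=\max\big(z_k-\eta\frac{\partial\mathcal{H}}{\partial z_k}(z),0\big)$ (with $\tilde z_k=0$ when $z_k=0$). Then $\tilde z$ is not a constant vector. Hence, iterating this update from a non-uniform initial vector, the masses never become uniform.
   Context: $\mathcal{H}(z)=-\sum_i \frac{z_i}{\sum_j z_j}\log\frac{z_i}{\sum_j z_j}$ with $0\log0=0$; for $z_k>0$ the gradient is the partial derivative, and for $z_k=0$ it is regarded as $+\infty$. *)

(* Defs.v *)
From HB Require Import structures.
From mathcomp Require Import all_boot all_order all_algebra.
From mathcomp Require Import all_classical all_reals all_analysis.
Set Implicit Arguments. Unset Strict Implicit. Unset Printing Implicit Defensive.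
Import Order.TTheory GRing.Theory Num.Theory.
Local Open Scope ring_scope.

Section Entropy.
Variables (R : realType) (s : nat).

Definition xlogx (x : R) : R := if x == 0 then 0 else x * ln x.

Definition entropyH (z : 'I_s -> R) : R :=
  - \sum_(i < s) xlogx (z i / \sum_(j < s) z j).

Definition shift_coord (z : 'I_s -> R) (k : 'I_s) (t : R) : 'I_s -> R :=
  fun i => if i == k then z i + t else z i.

(* partial derivative of H with respect to z_k at z (used only when z_k > 0) *)
Definition dH (z : 'I_s -> R) (k : 'I_s) : R :=
  derive1 (fun t => entropyH (shift_coord z k t)) 0.

(* one gradient-descent step with clipping at 0; when z_k = 0 the gradient
   is +oo, so the clipped update is 0 *)
Definition update (eta : R) (z : 'I_s -> R) : 'I_s -> R :=
  fun k => if z k == 0 then 0 else Num.max (z k - eta * dH z k) 0.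

Definition is_constant (z : 'I_s -> R) : Prop := exists c : R, forall i, z i = c.

End Entropy.

(* Main.v *)
Require Import Defs.
From HB Require Import structures.
From mathcomp Require Import all_boot all_order all_algebra.
From mathcomp Require Import all_classical all_reals all_analysis.
From mathcomp Require Import ring lra.
Import Order.TTheory GRing.Theory Num.Theory.
Local Open Scope ring_scope.

Section S.
Variables (R : realType) (s : nat).

Lemma xlogxE (x : R) : xlogx x = x * ln x.
Proof. by rewrite /xlogx; case: eqP => [->|//]; rewrite mul0r. Qed.

Lemma xlogx_div (w T : R) : 0 <= w -> 0 < T ->
  xlogx (w / T) = (w * ln w - w * ln T) / T.
Proof.
move=> w0 T0; rewrite xlogxE.
have [->|wp] := eqVneq w 0; first by rewrite !mul0r subrr mul0r.
have wp' : 0 < w by rewrite lt_def wp w0.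
rewrite lnM ?posrE ?invr_gt0 // lnV ?posrE //; field; lra.
Qed.

Lemma sum_shift (z : 'I_s -> R) k t :
  \sum_(j < s) shift_coord z k t j = \sum_(j < s) z j + t.
Proof.
rewrite (bigD1 k) //= [in RHS](bigD1 k) //= /shift_coord eqxx.
rewrite -addrA [t + _]addrC addrA; congr (_ + _).
by congr (_ + _); apply: eq_bigr => i /negPf ->.
Qed.


Lemma entropy_shift (z : 'I_s -> R) k t : (forall i, 0 <= z i) -> 0 < z k + t ->
  entropyH (shift_coord z k t) =
  ln (\sum_(j < s) z j + t) -
  (\sum_(i < s | i != k) z i * ln (z i) + (z k + t) * ln (z k + t)) /
  (\sum_(j < s) z j + t).
Proof.
move=> z0 at0.
set S := \sum_(j < s) z j.
have Sk : z k <= S.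
  rewrite /S (bigD1 k) //= lerDl; exact: sumr_ge0.
have T0 : 0 < S + t by lra.
rewrite /entropyH sum_shift -/S.
have w0 : forall j, 0 <= shift_coord z k t j.
  by move=> j; rewrite /shift_coord; case: eqP => [->|_]; [lra|exact: z0].
rewrite (eq_bigr (fun j => (shift_coord z k t j * ln (shift_coord z k t j)
   - shift_coord z k t j * ln (S + t)) / (S + t))); last first.
  by move=> j _; rewrite xlogx_div.
rewrite -mulr_suml sumrB -mulr_suml sum_shift -/S.
rewrite (bigD1 k) //= {1 2}/shift_coord eqxx.
rewrite (eq_bigr (fun i => z i * ln (z i))); last first.
  by move=> i /negPf; rewrite /shift_coord => ->.
field; lra.
Qed.


Lemma derG (S a C : R) : 0 < S -> 0 < a ->
  'D_1 (fun t => ln (S + t) - (C + (a + t) * ln (a + t)) / (S + t)) 0 =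
  S^-1 - ((ln a + 1) * S - (C + a * ln a)) / S ^+ 2.
Proof.
move=> S0 a0.
have d1 : forall c : R, is_derive (0:R) 1 (fun t => c + t) 1.
  move=> c; have H := @is_deriveD R R R (cst c) id 0 1 0 1 _ _.
  by rewrite add0r in H; exact: H.
have d2 : forall c : R, 0 < c -> is_derive (0:R) 1 (fun t => ln (c + t)) (c^-1).
  move=> c c0; have H := @is_derive1_comp R (@ln R) (fun t => c + t) 0 ((c + 0)^-1) 1 _ (d1 c).
  rewrite addr0 mulr1 in H; apply: H; exact: is_derive1_ln.
have d5 : is_derive (0:R) 1 (fun t => C + (a + t) * ln (a + t)) (ln a + 1).
  have H := @is_deriveM R R (fun t => a + t) (fun t => ln (a + t)) 0 1 _ _ (d1 a) (d2 a a0).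
  have H2 := @is_deriveD R R R (cst C) _ 0 1 0 _ (is_derive_cst _ _ _) H.
  rewrite /= !addr0 add0r in H2.
  apply: (is_derive_eq H2).
  change (a * a^-1 + ln a * 1 = ln a + 1); by rewrite mulr1 mulfV ?gt_eqF // addrC.
have d7 : is_derive (0:R) 1 (fun t => (S + t)^-1) (- S ^- 2).
  have HV := @is_deriveV R (fun t => S + t) 0 1 1 _ (d1 S).
  rewrite addr0 in HV; apply: (is_derive_eq (HV _)); try by rewrite gt_eqF.
  change (- S ^- 2 * 1 = - S ^- 2); by rewrite mulr1.
have d8 := @is_deriveM R R _ _ 0 1 _ _ d5 d7.
have d9 := @is_deriveB R R R _ _ 0 1 _ _ (d2 S S0) d8.
case: d9 => _ E; etransitivity; first exact: E.
rewrite !addr0.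
change (S^-1 - ((C + a * ln a) * - S ^- 2 + S^-1 * (ln a + 1)) =
  S^-1 - ((ln a + 1) * S - (C + a * ln a)) / S ^+ 2).
field; rewrite gt_eqF //.
Qed.


Lemma dH_val (z : 'I_s -> R) k : (forall i, 0 <= z i) -> 0 < z k ->
  dH z k = (\sum_(i < s) z i * ln (z i) - (\sum_(j < s) z j) * ln (z k))
           / (\sum_(j < s) z j) ^+ 2.
Proof.
move=> z0 a0.
set S := \sum_(j < s) z j.
have Sk : z k <= S.
  rewrite /S (bigD1 k) //= lerDl; exact: sumr_ge0.
have S0 : 0 < S by lra.
rewrite /dH derive1E.
rewrite (@near_eq_derive R R R _ (fun t => ln (S + t) -
  (\sum_(i < s | i != k) z i * ln (z i) + (z k + t) * ln (z k + t)) / (S + t))).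
  rewrite derG // [\sum_(i < s) _ * _](bigD1 k) //=; field; rewrite gt_eqF //.
have H := @lt_nbhsr R (- z k) 0 (ltac:(rewrite oppr_lt0; exact: a0)).
near=> t.
have Ht : - z k < t by near: t; exact: H.
by rewrite entropy_shift //; lra.
Unshelve. all: by end_near.
Qed.


Lemma step (eta : R) (z : 'I_s -> R) : 0 < eta ->
  (forall i, 0 <= z i) -> 0 < \sum_(j < s) z j -> ~ is_constant z ->
  [/\ (forall i, 0 <= update eta z i), 0 < \sum_(j < s) update eta z j
    & ~ is_constant (update eta z)].
Proof.
move=> eta0 z0 S0 nc.
have [i0 _] : exists i : 'I_s, True.
  apply: contrapT => H; apply: nc; exists 0 => i; exfalso; apply: H; by exists i.
case: (@arg_maxP _ _ 'I_s i0 xpredT z isT) => m _ Hm.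
have zm : forall i, z i <= z m by move=> i; exact: Hm.
have zm0 : 0 < z m.
  rewrite lt_def z0 andbT; apply/eqP => E.
  suff : \sum_(j < s) z j = 0 by lra.
  by apply: big1 => i _; apply/le_anti; rewrite z0 -E zm.
have [i1 Hi1] : exists i1, z i1 < z m.
  apply: contrapT => H; apply: nc; exists (z m) => i; apply/le_anti.
  rewrite zm /=; rewrite leNgt; apply/negP => Hi; apply: H; by exists i.
set S := \sum_(j < s) z j.
set L := \sum_(i < s) z i * ln (z i).
have SL : L <= S * ln (z m).
  rewrite /L /S mulr_suml -subr_ge0 -sumrB; apply: sumr_ge0 => i _.
  have [->|zi] := eqVneq (z i) 0; first by rewrite !mul0r subrr.
  have zi0 : 0 < z i by rewrite lt_def zi z0.
  rewrite -mulrBr mulr_ge0 // subr_ge0 ler_ln ?posrE //.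
have S2 : 0 < S ^+ 2 by rewrite exprn_gt0.
have dm : dH z m <= 0.
  rewrite dH_val // -/S -/L; apply: mulr_le0_ge0; first by lra.
  by rewrite invr_ge0 ltW.
set y := z m - eta * dH z m.
have ym : z m <= y.
  rewrite /y; have : 0 <= eta * - dH z m by apply: mulr_ge0; lra.
  lra.
have um : update eta z m = y.
  by rewrite /update /= gt_eqF // max_l // -/y; lra.
have ult : update eta z i1 < update eta z m.
  rewrite um /update /=.
  case: eqP => [_|zi]; first by lra.
  have zi0 : 0 < z i1 by rewrite lt_def z0 andbT; apply/eqP.
  rewrite gt_max; apply/andP; split; last by lra.
  have d : dH z m <= dH z i1.
    rewrite !dH_val // -/S -/L; apply: ler_wpM2r; first by rewrite invr_ge0 ltW.
    rewrite lerD2l lerN2; apply: ler_wpM2l; first exact: ltW.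
    by rewrite ler_ln ?posrE // ltW.
  have : eta * dH z m <= eta * dH z i1 by apply: ler_wpM2l; [exact: ltW|].
  rewrite /y; lra.
have uge : forall i, 0 <= update eta z i.
  by move=> i; rewrite /update /=; case: eqP => _ //; rewrite le_max lexx orbT.
split => //.
  rewrite (bigD1 m) //= ; apply: (@lt_le_trans _ _ (update eta z m)); first by lra.
  rewrite lerDl; exact: sumr_ge0.
case=> c Hc; move: ult; rewrite !Hc; lra.
Qed.

End S.

Theorem corollary5 (R : realType) (s : nat) (eta : R) (z : 'I_s -> R) :
  (2 <= s)%N -> 0 < eta ->
  (forall i, 0 <= z i) -> 0 < \sum_(j < s) z j ->
  ~ is_constant z ->
  ~ is_constant (update eta z) /\
  (forall n : nat, ~ is_constant (iter n (update eta) z)).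
Proof.
move=> _ eta0 z0 S0 nc.
have inv : forall n, [/\ (forall i, 0 <= iter n (update eta) z i),
    0 < \sum_(j < s) iter n (update eta) z j & ~ is_constant (iter n (update eta) z)].
  elim=> [|n [h1 h2 h3]] /=; first by split.
  exact: step.
split; last by move=> n; case: (inv n).
by case: (inv 1%N).
Qed.
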